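(* Let $(\mu^{(n)})$ be an almost-Berger sequence. Then $\sec(\mu^{(n)})(e_0\wedge e_1)\to0$, $\sec(\mu^{(n)})(e_1\wedge e_2)\to4$ and $\sec(\mu^{(n)})(e_0\wedge e_2)\to0$ as $n\to+\infty$ if and only if $\mathrm{reg}(\mu^{(n)})\ge2$.
   Context: Let $X_0=\begin{pmatrix}i&0\\0&-i\end{pmatrix}$, $X_1=\begin{pmatrix}0&-1\\1&0\end{pmatrix}$, $X_2=\begin{pmatrix}0&i\\i&0\end{pmatrix}$, a basis of $\mathfrak{su}(2)$ with $[X_0,X_1]=-2X_2$, $[X_0,X_2]=2X_1$, $[X_1,X_2]=-2X_0$. For $\varepsilon,\lambda_1,\lambda_2>0$ let $g$ be the left-invariant metric on $\mathsf{SU}(2)$ with $X_0,X_1,X_2$ pairwise orthogonal and $g(X_0,X_0)=\varepsilon$, $g(X_1,X_1)=\lambda_1$, $g(X_2,X_2)=\lambda_2$; identify the orthonormal basis $X_0/\sqrt\varepsilon,X_1/\sqrt{\lambda_1},X_2/\sqrt{\lambda_2}$ with the standard basis $(e_0,e_1,e_2)$ of $\mathbb R^3$, and let $\mu$ be the corresponding bracket on $\mathbb R^3$; $\sec(\mu)(e_i\wedge e_j)$ denotes the sectional curvature of $g$ on the plane spanned by $e_i,e_j$. An almost-Berger sequence is a sequence $(\mu^{(n)})$ of such brackets, with parameters $(\varepsilon^{(n)},\lambda_1^{(n)},\lambda_2^{(n)})$, such that $\varepsilon^{(n)}\to0$, $\lambda_i^{(n)}\to1$ ($i=1,2$), and there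 is $C>0$ with $|\lambda_1^{(n)}-\lambda_2^{(n)}|\le C\varepsilon^{(n)}$ for all $n$ (equivalently, the sectional curvatures are uniformly bounded). Its regularity index is $\mathrm{reg}(\mu^{(n)})=\sup\{k\in\mathbb Z:(\varepsilon^{(n)})^{-k/2}|\lambda_1^{(n)}-\lambda_2^{(n)}|\to0\text{ as }n\to\infty\}\in\{1,2,\dots\}\cup\{+\infty\}$. *)

(* Defs.v *)
From Stdlib Require Import Reals Lra ZArith.
Open Scope R_scope.

(* Structure constants of su(2) in the basis X0, X1, X2:
   [X_i, X_j] = sum_k su2_a i j k * X_k, with
   [X0,X1] = -2 X2, [X0,X2] = 2 X1, [X1,X2] = -2 X0 (and antisymmetry). *)
Definition su2_a (i j k : nat) : R :=
  match i, j, k with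
  | 0, 1, 2 => -2 | 1, 0, 2 => 2
  | 0, 2, 1 => 2  | 2, 0, 1 => -2
  | 1, 2, 0 => -2 | 2, 1, 0 => 2
  | _, _, _ => 0
  end.

Definition gdiag (eps l1 l2 : R) (i : nat) : R :=
  match i with 0 => eps | 1 => l1 | _ => l2 end.

(* The bracket mu on R^3 obtained by identifying the g-orthonormal basis
   e_i = X_i / sqrt(g(X_i,X_i)) with the standard basis:
   mu(e_i, e_j) = sum_k mu_c i j k e_k, where
   mu_c i j k = su2_a i j k * sqrt(g_k) / (sqrt(g_i) sqrt(g_j)). *)
Definition mu_c (eps l1 l2 : R) (i j k : nat) : R :=
  su2_a i j k * sqrt (gdiag eps l1 l2 k)
  / (sqrt (gdiag eps l1 l2 i) * sqrt (gdiag eps l1 l2 j)).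

Definition sum3 (f : nat -> R) : R := sum_f_R0 f 2.

(* Levi-Civita connection of the left-invariant metric for which the e_i
   are orthonormal, from the Koszul formula:
   <nabla_{e_i} e_j, e_k> = 1/2 (c_ijk - c_jki + c_kij),
   with c_ijk = <mu(e_i,e_j), e_k>. *)
Definition Gamma (c : nat -> nat -> nat -> R) (i j k : nat) : R :=
  / 2 * (c i j k - c j k i + c k i j).

(* <R(e_i,e_j) e_l, e_p> with R(X,Y) = nabla_X nabla_Y - nabla_Y nabla_X - nabla_[X,Y]
   (all fields left-invariant, so coefficients are constant). *)
Definition Rm (c : nat -> nat -> nat -> R) (i j l p : nat) : R :=
  sum3 (fun m => Gamma c j l m * Gamma c i m p
                 - Gamma c i l m * Gamma c j m p
                 - c i j m * Gamma c m l p).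

Definition sec (c : nat -> nat -> nat -> R) (i j : nat) : R := Rm c i j j i.

Definition sec_seq (eps l1 l2 : nat -> R) (i j : nat) : nat -> R :=
  fun n => sec (mu_c (eps n) (l1 n) (l2 n)) i j.

Definition almost_Berger (eps l1 l2 : nat -> R) : Prop :=
  (forall n, 0 < eps n) /\ (forall n, 0 < l1 n) /\ (forall n, 0 < l2 n) /\
  Un_cv eps 0 /\ Un_cv l1 1 /\ Un_cv l2 1 /\
  exists C, 0 < C /\ forall n, Rabs (l1 n - l2 n) <= C * eps n.

(* k is in the set whose supremum is the regularity index:
   eps^(-k/2) |l1 - l2| -> 0. *)
Definition reg_set (eps l1 l2 : nat -> R) (k : Z) : Prop :=
  Un_cv (fun n => Rpower (eps n) (- IZR k / 2) * Rabs (l1 n - l2 n)) 0.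

(* reg(mu^(n)) >= k, i.e. sup { k' in Z | reg_set k' } >= k; for a set of
   integers this is literally: some element k' >= k. *)
Definition reg_ge (eps l1 l2 : nat -> R) (k : Z) : Prop :=
  exists k' : Z, (k <= k')%Z /\ reg_set eps l1 l2 k'.

(* Main.v *)
Require Import Defs.
From Stdlib Require Import Reals Lra Lia ZArith.
Open Scope R_scope.

Lemma sec_gen (x y z : R) : 0 < x -> 0 < y -> 0 < z ->
  sec (mu_c (x*x) (y*y) (z*z)) 0 1 =
   ((y*y - z*z)*(y*y + 3*(z*z) - 2*(x*x)) + (x*x)*(x*x)) / ((x*x)*(y*y)*(z*z)) /\
  sec (mu_c (x*x) (y*y) (z*z)) 0 2 =
   ((z*z - y*y)*(z*z + 3*(y*y) - 2*(x*x)) + (x*x)*(x*x)) / ((x*x)*(y*y)*(z*z)) /\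
  sec (mu_c (x*x) (y*y) (z*z)) 1 2 =
   ((y*y - z*z)*(y*y - z*z) - 3*((x*x)*(x*x)) + 2*(x*x)*(y*y+z*z)) / ((x*x)*(y*y)*(z*z)).
Proof.
  intros hx hy hz.
  unfold sec, Rm, sum3, Gamma, mu_c, gdiag, su2_a; simpl.
  rewrite !sqrt_square by lra.
  repeat split; field; lra.
Qed.

Lemma sec_eab (e a b : R) : 0 < e -> 0 < a -> 0 < b ->
  sec (mu_c e a b) 0 1 = ((a-b)/e*(a+3*b-2*e)+e) * / (a*b) /\
  sec (mu_c e a b) 0 2 = (-((a-b)/e)*(b+3*a-2*e)+e) * / (a*b) /\
  sec (mu_c e a b) 1 2 = ((a-b)/e*((a-b)/e)*e - 3*e + 2*(a+b)) * / (a*b).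
Proof.
  intros he ha hb.
  destruct (sec_gen (sqrt e) (sqrt a) (sqrt b)) as [H1 [H2 H3]];
    try apply sqrt_lt_R0; auto.
  rewrite !sqrt_sqrt in H1, H2, H3 by lra.
  rewrite H1, H2, H3.
  repeat split; field; lra.
Qed.

Lemma Un_cv_inv (u : nat -> R) (l : R) : l <> 0 -> Un_cv u l ->
  Un_cv (fun n => / u n) (/ l).
Proof.
  intros hl hu.
  apply (continuity_seq (fun x => / x) u l); auto.
  apply (continuity_pt_inv (fun x => x)); auto.
  apply derivable_continuous_pt, derivable_pt_id.
Qed.

Lemma Un_cv_abs0 (u : nat -> R) : Un_cv (fun n => Rabs (u n)) 0 -> Un_cv u 0.
Proof.
  unfold Un_cv, R_dist; intros H eps' he.
  destruct (H eps' he) as [N HN]; exists N; intros n hn.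
  specialize (HN n hn). rewrite Rminus_0_r, Rabs_Rabsolu in HN.
  rewrite Rminus_0_r; exact HN.
Qed.

Lemma Un_cv_squeeze0 (u w : nat -> R) (N0 : nat) : Un_cv u 0 ->
  (forall n, (n >= N0)%nat -> Rabs (w n) <= Rabs (u n)) -> Un_cv w 0.
Proof.
  unfold Un_cv, R_dist; intros H Hle eps' he.
  destruct (H eps' he) as [N HN]; exists (Nat.max N N0); intros n hn.
  specialize (HN n ltac:(lia)). specialize (Hle n ltac:(lia)).
  rewrite Rminus_0_r in *; lra.
Qed.

Lemma Un_cv_div0 (u v : nat -> R) (l : R) : l <> 0 ->
  Un_cv (fun n => u n * v n) 0 -> Un_cv v l -> Un_cv u 0.
Proof.
  intros hl Huv Hv.
  assert (hl' : 0 < Rabs l / 2) by (assert (Rabs l > 0) by (apply Rabs_pos_lt; auto); lra).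
  destruct (Hv _ hl') as [N1 HN1].
  intros eps' he.
  assert (he' : eps' * (Rabs l / 2) > 0) by (apply Rmult_lt_0_compat; lra).
  destruct (Huv _ he') as [N2 HN2].
  exists (Nat.max N1 N2); intros n hn.
  specialize (HN1 n ltac:(lia)). specialize (HN2 n ltac:(lia)).
  unfold R_dist in *. rewrite Rminus_0_r in *.
  rewrite Rabs_mult in HN2.
  assert (Rabs l - Rabs (v n) <= Rabs (v n - l)).
  { pose proof (Rabs_triang_inv l (v n)). rewrite Rabs_minus_sym. lra. }
  assert (Rabs (v n) > Rabs l / 2) by lra.
  assert (Rabs (u n) * (Rabs l / 2) <= Rabs (u n) * Rabs (v n)).
  { apply Rmult_le_compat_l; [apply Rabs_pos | lra]. }
  assert (Rabs (u n) * (Rabs l / 2) < eps' * (Rabs l / 2)) by lra.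
  apply Rmult_lt_reg_r in H2; lra.
Qed.

Lemma rpow_bound (x : R) (k : Z) : 0 < x -> x <= 1 -> (2 <= k)%Z ->
  / x <= Rpower x (- IZR k / 2).
Proof.
  intros hx hx1 hk.
  unfold Rpower.
  rewrite <- (exp_ln x) at 1 by lra. rewrite <- exp_Ropp.
  assert (ln x <= 0) by (rewrite <- ln_1; destruct (Rle_lt_or_eq_dec _ _ hx1) as [h|h];
     [left; apply ln_increasing; lra | rewrite h; lra]).
  apply IZR_le in hk.
  assert (- ln x <= - IZR k / 2 * ln x) by nra.
  destruct (Rle_lt_or_eq_dec _ _ H0) as [h|h].
  - left; apply exp_increasing; exact h.
  - rewrite h; lra.
Qed.

Theorem proposition4p3 (eps l1 l2 : nat -> R) :
  almost_Berger eps l1 l2 ->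
  ((Un_cv (sec_seq eps l1 l2 0 1) 0 /\
    Un_cv (sec_seq eps l1 l2 1 2) 4 /\
    Un_cv (sec_seq eps l1 l2 0 2) 0)
   <-> reg_ge eps l1 l2 2%Z).
Proof.
  intros [he [ha [hb [ce [ca [cb [C [hC hCb]]]]]]]].
  set (d := fun n => (l1 n - l2 n) / eps n).
  assert (Hf : forall n,
    sec_seq eps l1 l2 0 1 n = (d n * (l1 n + 3 * l2 n - 2 * eps n) + eps n) * / (l1 n * l2 n) /\
    sec_seq eps l1 l2 0 2 n = (- d n * (l2 n + 3 * l1 n - 2 * eps n) + eps n) * / (l1 n * l2 n) /\
    sec_seq eps l1 l2 1 2 n = (d n * d n * eps n - 3 * eps n + 2 * (l1 n + l2 n)) * / (l1 n * l2 n)).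
  { intro n; unfold sec_seq, d; apply sec_eab; auto. }
  assert (Cab : Un_cv (fun n => / (l1 n * l2 n)) (/ (1 * 1))).
  { apply Un_cv_inv; [lra|]. apply CV_mult; auto. }
  assert (Cconst : forall c, Un_cv (fun _ : nat => c) c).
  { intros c x hx; exists 0%nat; intros; unfold R_dist; rewrite Rminus_diag, Rabs_R0; lra. }
  assert (Cq : Un_cv (fun n => l1 n + 3 * l2 n - 2 * eps n) (1 + 3 * 1 - 2 * 0)).
  { apply CV_minus; [apply CV_plus; auto|].
    - apply (CV_mult (fun _ => 3)); auto.
    - apply (CV_mult (fun _ => 2)); auto. }
  split.
  - intros [H01 [H12 H02]].
    assert (Hd : Un_cv d 0).
    { apply (Un_cv_div0 d (fun n => l1 n + 3 * l2 n - 2 * eps n) (1 + 3 * 1 - 2 * 0)); [lra| |exact Cq].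
      apply Un_cv_ext with (fun n => sec_seq eps l1 l2 0 1 n * (l1 n * l2 n) - eps n).
      { intro n. destruct (Hf n) as [E _]. rewrite E. field. split; apply Rgt_not_eq; unfold Rgt; auto. }
      replace 0 with (0 * (1 * 1) - 0) by ring.
      apply CV_minus; auto. apply CV_mult; auto. apply CV_mult; auto. }
    exists 2%Z; split; [lia|].
    unfold reg_set.
    apply Un_cv_ext with (fun n => Rabs (d n)).
    { intro n. unfold d. replace (- IZR 2 / 2) with (Ropp 1) by (simpl; lra).
      rewrite Rpower_Ropp, Rpower_1 by auto.
      unfold Rdiv. rewrite Rabs_mult, Rabs_inv, (Rabs_right (eps n)) by (left; apply he).
      ring. }
    intros x hx. destruct (Hd x hx) as [N HN]; exists N; intros n hn.
    specialize (HN n hn); unfold R_dist in *. rewrite Rminus_0_r in *.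
    rewrite Rabs_Rabsolu; exact HN.
  - intros [k [hk Hk]].
    unfold reg_set in Hk.
    assert (Hd : Un_cv d 0).
    { destruct (ce 1 ltac:(lra)) as [N HN].
      apply (Un_cv_squeeze0 _ d N Hk).
      intros n hn. specialize (HN n hn). unfold R_dist in HN.
      rewrite Rminus_0_r, Rabs_right in HN by (left; apply he).
      pose proof (rpow_bound (eps n) k (he n) ltac:(lra) hk).
      unfold d, Rdiv. rewrite Rabs_mult, Rabs_mult, Rabs_inv, Rabs_Rabsolu.
      rewrite (Rabs_right (eps n)) by (left; apply he).
      rewrite (Rabs_right (Rpower _ _)) by (left; apply exp_pos).
      rewrite Rmult_comm. apply Rmult_le_compat_r; [apply Rabs_pos| exact H]. }
    split; [|split].
    + apply Un_cv_ext with (fun n => (d n * (l1 n + 3 * l2 n - 2 * eps n) + eps n) * / (l1 n * l2 n)).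
      { intro n; symmetry; apply (Hf n). }
      replace 0 with ((0 * (1 + 3 * 1 - 2 * 0) + 0) * / (1 * 1)) by field.
      apply CV_mult; auto. apply CV_plus; auto. apply CV_mult; auto.
    + apply Un_cv_ext with (fun n => (d n * d n * eps n - 3 * eps n + 2 * (l1 n + l2 n)) * / (l1 n * l2 n)).
      { intro n; symmetry; apply (Hf n). }
      replace 4 with ((0 * 0 * 0 - 3 * 0 + 2 * (1 + 1)) * / (1 * 1)) by field.
      apply CV_mult; auto. apply CV_plus; [apply CV_minus|].
      * apply CV_mult; auto. apply CV_mult; auto.
      * apply (CV_mult (fun _ => 3)); auto.
      * apply (CV_mult (fun _ => 2)); auto. apply CV_plus; auto.
    + apply Un_cv_ext with (fun n => (- d n * (l2 n + 3 * l1 n - 2 * eps n) + eps n) * / (l1 n * l2 n)).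
      { intro n; symmetry; apply (Hf n). }
      replace 0 with ((- 0 * (1 + 3 * 1 - 2 * 0) + 0) * / (1 * 1)) by field.
      apply CV_mult; auto. apply CV_plus; auto. apply CV_mult.
      * apply Un_cv_ext with (fun n => - d n); [reflexivity|].
        apply (CV_opp d 0) in Hd. exact Hd.
      * apply CV_minus; [apply CV_plus; auto|].
        -- apply (CV_mult (fun _ => 3)); auto.
        -- apply (CV_mult (fun _ => 2)); auto.
Qed.
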